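(* For $u\in\mathbb{Z}_n$ and $j\in\mathbb{Z}_n$ set $E_{u,j}=\sum_{v=0}^{n/d-1}e_{j+vd}E_u$. Then for $j,\ell\in\{0,\dots,d-1\}$ we have $E_{u,j}E_{u,\ell}=\delta_{j\ell}E_{u,j}$, $\sum_{j=0}^{d-1}E_{u,j}=E_u$, and $E_{u,j}=E_{u,j'}$ if and only if $j\equiv j'\pmod d$. Moreover, in $\Gamma_u=\mathcal{D}(\Lambda_{n,d})E_u$: $$GE_{u,j}=q^{u+j}E_{u,j}=E_{u,j}G,\qquad XE_{u,j}=E_{u,j-1}X,$$ and $\gamma_\ell^mE_{u,j}=E_{u,j+m}\gamma_\ell^m$ if $\ell\equiv j\pmod d$, while $\gamma_\ell^mE_{u,j}=0$ otherwise.
   Context: $k$ is an algebraically closed field; $n,d$ integers with $d\geqslant2$, $d\mid n$, $\mathrm{char}\,k\nmid n$; $q$ a primitive $d$-th root of unity. $\Lambda_{n,d}$ is the path algebra of the cyclic quiver with vertices $e_i$ and arrows $a_i:e_i\to e_{i+1}$ ($i\in\mathbb{Z}_n$) modulo all paths of length $d$; $\gamma_i^m=a_{i+m-1}\cdots a_i$, $\gamma_i^0=e_i$. $\mathcal{D}(\Lambda_{n,d})$ is the Drinfel'd double of the Hopf algebra $\Lambda_{n,d}$; concretely it has basis $G^iX^j\gamma_\ell^m$ ($i,\ell\in\mathbb{Z}_n$, $0\leqslant j,m\leqslant d-1$) and is generated by $G,X,e_i,a_i$ with relations $G^n=1$, $X^d=0$, $GX=q^{-1}XG$, products of paths as in $\Lambda_{n,d}$,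 $\gamma_\ell^mG=q^{-m}G\gamma_\ell^m$, $\gamma_\ell^mX=q^{-m}X\gamma_{\ell+1}^m-q^{-m}(m)_q\gamma_{\ell+1}^{m-1}+q^{\ell+1-m}(m)_qG\gamma_{\ell+1}^{m-1}$, with $(m)_q=1+q+\cdots+q^{m-1}$. $E_u=\frac1n\sum_{i,j\in\mathbb{Z}_n}q^{-i(u+j)}G^ie_j$; these are central orthogonal idempotents summing to $1$. *)

(* Defs.v *)
From HB Require Import structures.
From mathcomp Require Import all_boot all_order all_algebra.
Set Implicit Arguments. Unset Strict Implicit. Unset Printing Implicit Defensive.
Import Order.TTheory GRing.Theory Num.Theory.
Local Open Scope ring_scope.

(* Indices in Z_n are represented by naturals; the families e, a : nat -> A
   are assumed n-periodic in the main statement. *)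

Definition gam (k : fieldType) (A : algType k) (e a : nat -> A) (l m : nat) : A :=
  if m == 0%N then e l else \prod_(i < m) a (l + (m.-1 - i))%N.

Definition qint (k : fieldType) (q : k) (m : nat) : k := \sum_(i < m) q ^+ i.

Definition Eu (k : fieldType) (A : algType k) (n : nat) (q : k) (G : A)
  (e : nat -> A) (u : nat) : A :=
  (n%:R)^-1 *: \sum_(i < n) \sum_(j < n) (q ^- (i * (u + j))) *: (G ^+ i * e j).

Definition Euj (k : fieldType) (A : algType k) (n d : nat) (q : k) (G : A)
  (e : nat -> A) (u j : nat) : A :=
  \sum_(v < n %/ d) e (j + v * d)%N * Eu n q G e u.

Definition Dbasis (k : fieldType) (A : algType k) (n d : nat) (G X : A)
  (e a : nat -> A) (t : 'I_n * 'I_d * 'I_n * 'I_d) : A :=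
  let: (i, j, l, m) := t in G ^+ i * X ^+ j * gam e a l m.

Arguments Dbasis {k A} n d G X e a t.

(* A is (a copy of) the Drinfel'd double D(Lambda_{n,d}): generated by G, X,
   e_i, a_i with the stated relations, and with basis G^i X^j gamma_l^m. *)
Definition is_DLambda (k : fieldType) (A : algType k) (n d : nat) (q : k)
  (G X : A) (e a : nat -> A) : Prop :=
  [/\ (forall i, e (i + n)%N = e i /\ a (i + n)%N = a i),
      (* relations of Lambda_{n,d} = kQ / (paths of length d) *)
      [/\ \sum_(i < n) e i = 1,
          (forall i j, e i * e j = if (i %% n == j %% n)%N then e i else 0),
          (forall i j, a i * e j = if (i %% n == j %% n)%N then a i else 0),
          (forall i j, e j * a i = if (j %% n == i.+1 %% n)%N then a i else 0)
        & (forall l, gam e a l d = 0)],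
      [/\ G ^+ n = 1, X ^+ d = 0, G * X = q^-1 *: (X * G),
          (forall l m, (m < d)%N -> gam e a l m * G = q ^- m *: (G * gam e a l m))
        & (forall l m, (m < d)%N ->
             gam e a l m * X =
               q ^- m *: (X * gam e a l.+1 m)
             - (q ^- m * qint q m) *: gam e a l.+1 m.-1
             + (q ^ (l.+1%:Z - m%:Z) * qint q m) *: (G * gam e a l.+1 m.-1))],
      (forall c : {ffun 'I_n * 'I_d * 'I_n * 'I_d -> k},
          \sum_t c t *: Dbasis n d G X e a t = 0 -> forall t, c t = 0)
    &
      (forall x : A, exists c : {ffun 'I_n * 'I_d * 'I_n * 'I_d -> k},
          x = \sum_t c t *: Dbasis n d G X e a t)].

(* Main.v *)
Require Import Defs.
From HB Require Import structures.
From mathcomp Require Import all_boot all_order all_algebra.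
From mathcomp Require Import zify.
Import Order.TTheory GRing.Theory Num.Theory.

Lemma modMD (r t m d : nat) : (r < d)%N -> (0 < m)%N ->
  ((r + t * d) %% (m * d) = r + (t %% m) * d)%N.
Proof.
move=> rd m0.
rewrite {1}(divn_eq t m).
have -> : r + (t %/ m * m + t %% m) * d = t %/ m * (m * d) + (r + t %% m * d) by nia.
rewrite modnMDl modn_small //.
have : (t %% m < m)%N by rewrite ltn_pmod.
nia.
Qed.

Lemma arith_ex (j l n d : nat) : (0 < d)%N -> (0 < n)%N -> (d %| n)%N ->
  (j %% d = l %% d)%N -> exists v : 'I_(n %/ d), ((j + v * d) %% n = l %% n)%N.
Proof.
move=> d0 n0 dn jl.
set m := (n %/ d)%N.
have nE : n = (m * d)%N by rewrite divnK.
have m0 : (0 < m)%N by rewrite /m divn_gt0 // dvdn_leq.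
have vlt : ((l %/ d + (m - (j %/ d) %% m)) %% m < m)%N by rewrite ltn_pmod.
exists (Ordinal vlt) => /=.
set v := ((l %/ d + (m - (j %/ d) %% m)) %% m)%N.
rewrite nE {1}(divn_eq j d) {1}(divn_eq l d).
have -> : (j %/ d * d + j %% d + v * d = j %% d + (j %/ d + v) * d)%N by nia.
have -> : (l %/ d * d + l %% d = l %% d + l %/ d * d)%N by nia.
rewrite jl !modMD ?ltn_pmod //.
congr (_ + _ * _)%N.
rewrite /v modnDmr.
have h : (j %/ d %% m <= m)%N by rewrite ltnW ?ltn_pmod.
rewrite {1}(divn_eq (j %/ d) m).
have -> : (j %/ d %/ m * m + j %/ d %% m + (l %/ d + (m - j %/ d %% m)) =
   (j %/ d %/ m) * m + (l %/ d + m))%N by lia.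
by rewrite modnMDl modnDr.
Qed.

Lemma arith_uniq (j v w n d : nat) : (0 < d)%N -> (d %| n)%N ->
  (v < n %/ d)%N -> (w < n %/ d)%N ->
  ((j + v * d) %% n = (j + w * d) %% n)%N -> v = w.
Proof.
move=> d0 dn vl wl /eqP.
rewrite eqn_modDl -(divnK dn) !modn_small ?ltn_pmul2r //.
by move/eqP/(congr1 (fun x => x %/ d)%N); rewrite !mulnK.
Qed.

Local Open Scope ring_scope.
Lemma sum_shift (V : zmodType) (h : nat -> V) m :
  h m = h 0%N -> \sum_(i < m) h i.+1 = \sum_(i < m) h i.
Proof.
move=> hm.
apply: (addIr (h 0%N)). rewrite addrC.
have -> : h 0%N + \sum_(i<m) h i.+1 = \sum_(i < m.+1) h i.
  by rewrite big_ord_recl; congr (_ + _); apply: eq_bigr => i _; rewrite lift0.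
by rewrite big_ord_recr /= hm.
Qed.

Lemma sum4 (V : nmodType) n1 n2 n3 n4 (H : 'I_n1 * 'I_n2 * 'I_n3 * 'I_n4 -> V) :
  \sum_t H t = \sum_i \sum_j \sum_l \sum_m H (i, j, l, m).
Proof.
symmetry.
transitivity (\sum_(p : 'I_n1 * 'I_n2 * 'I_n3) \sum_(m : 'I_n4) H (p, m)).
  transitivity (\sum_(p : 'I_n1 * 'I_n2) \sum_(l : 'I_n3) \sum_(m : 'I_n4) H (p, l, m)).
    rewrite pair_bigA /=; by apply: eq_bigr => -[].
  rewrite pair_bigA /=; by apply: eq_bigr => -[].
rewrite pair_bigA /=; by apply: eq_bigr => -[].
Qed.


Lemma sum_split_mul (V : nmodType) (F : nat -> V) m d :
  \sum_(s < m * d) F s = \sum_(v < m) \sum_(j < d) F (j + v * d)%N.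
Proof.
elim: m => [|m IH]; first by rewrite mul0n !big_ord0.
rewrite mulSnr big_split_ord /= IH big_ord_recr /=.
congr (_ + _); apply: eq_bigr => i _; by rewrite addnC.
Qed.

Section Main.
Variables (k : fieldType) (A : algType k) (n d : nat) (q : k) (G X : A)
  (e a : nat -> A).
Hypothesis d2 : (2 <= d)%N.
Hypothesis dn : (d %| n)%N.
Hypothesis n0 : (n%:R : k) != 0.
Hypothesis prim : d.-primitive_root q.
Hypothesis eper : forall i, e (i + n)%N = e i.
Hypothesis ee : forall i j, e i * e j = if (i %% n == j %% n)%N then e i else 0.
Hypothesis ae : forall i j, a i * e j = if (i %% n == j %% n)%N then a i else 0.
Hypothesis ea : forall i j, e j * a i = if (j %% n == i.+1 %% n)%N then a i else 0.
Hypothesis Gn : G ^+ n = 1.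
Hypothesis GX : G * X = q^-1 *: (X * G).
Hypothesis gG : forall l m, (m < d)%N -> gam e a l m * G = q ^- m *: (G * gam e a l m).
Hypothesis gX : forall l m, (m < d)%N ->
             gam e a l m * X =
               q ^- m *: (X * gam e a l.+1 m)
             - (q ^- m * qint q m) *: gam e a l.+1 m.-1
             + (q ^ (l.+1%:Z - m%:Z) * qint q m) *: (G * gam e a l.+1 m.-1).
Hypothesis indep : forall c : {ffun 'I_n * 'I_d * 'I_n * 'I_d -> k},
          \sum_t c t *: Dbasis n d G X e a t = 0 -> forall t, c t = 0.

Lemma d_gt0 : (0 < d)%N. Proof. by apply: leq_trans d2. Qed.
Lemma n_gt0 : (0 < n)%N. Proof. by case: n n0 => //; rewrite eqxx. Qed.

Let r := q^-1.
Lemma qd : q ^+ d = 1. Proof. exact: prim_expr_order. Qed.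
Lemma q_neq0 : q != 0.
Proof.
apply/negP => /eqP q0; have := qd; rewrite q0 expr0n.
have := d_gt0; rewrite lt0n => /negbTE -> /eqP; by rewrite eq_sym oner_eq0.
Qed.
Lemma qr : q * r = 1. Proof. by rewrite /r mulfV // q_neq0. Qed.
Lemma rd : r ^+ d = 1. Proof. by rewrite /r exprVn qd invr1. Qed.
Lemma rn : r ^+ n = 1.
Proof. by rewrite -(divnK dn) mulnC exprM rd expr1n. Qed.
Lemma qn : q ^+ n = 1.
Proof. by rewrite -(divnK dn) mulnC exprM qd expr1n. Qed.
Lemma qmE m : q ^- m = r ^+ m. Proof. by rewrite /r exprVn. Qed.

Lemma emod i : e i = e (i %% n).
Proof.
rewrite {1}(divn_eq i n); elim: (i %/ n)%N => [|m IH]; first by rewrite mul0n add0n.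
by rewrite mulSnr addnAC eper.
Qed.

Lemma eG l : e l * G = G * e l.
Proof. by have := gG l 0 d_gt0; rewrite /gam /= expr0 invr1 scale1r. Qed.

Lemma eX l : e l * X = X * e l.+1.
Proof.
have := gX l 0 d_gt0; rewrite /gam /= /qint big_ord0 !mulr0 !scale0r expr0 invr1 scale1r.
by rewrite subr0 addr0.
Qed.

Definition f (c : nat) : A := (n%:R)^-1 *: \sum_(i < n) r ^+ (i * c) *: G ^+ i.

Lemma Eu_eq u : Eu n q G e u = \sum_(s < n) f (u + s) * e s.
Proof.
rewrite /Eu exchange_big scaler_sumr; apply: eq_bigr => s _.
rewrite /f -scalerAl mulr_suml; congr (_ *: _); apply: eq_bigr => i _.
by rewrite -scalerAl qmE.
Qed.

Lemma f_mod c c' : (c = c' %[mod d])%N -> f c = f c'.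
Proof.
move=> h; rewrite /f; congr (_ *: _); apply: eq_bigr => i _.
by rewrite !(mulnC i) !exprM -(expr_mod _ rd) h (expr_mod _ rd).
Qed.

Lemma G_f c : G * f c = q ^+ c *: f c.
Proof.
rewrite /f scalerA mulrC -scalerA -scalerAr; congr (_ *: _).
rewrite mulr_sumr scaler_sumr.
have -> : \sum_(i < n) G * (r ^+ (i * c) *: G ^+ i) =
   \sum_(i < n) (fun i => q ^+ c * r ^+ (i * c) *: G ^+ i) i.+1.
  apply: eq_bigr => i _ /=.
  rewrite -scalerAr -exprS mulSn exprD mulrA -exprMn qr expr1n mul1r //.
rewrite (@sum_shift _ (fun i => q ^+ c * r ^+ (i * c) *: G ^+ i)); last by rewrite mul0n expr0 exprM rn expr1n Gn expr0.
by apply: eq_bigr => i _; rewrite scalerA.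
Qed.

Lemma Gexp_f i c : G ^+ i * f c = q ^+ (i * c) *: f c.
Proof.
elim: i => [|i IH]; first by rewrite expr0 mul1r mul0n expr0 scale1r.
by rewrite exprS -mulrA IH -scalerAr G_f scalerA -exprD mulSn addnC.
Qed.

Lemma f_idem c : f c * f c = f c.
Proof.
rewrite {1}/f -scalerAl mulr_suml.
under eq_bigr => i _ do rewrite -scalerAl Gexp_f scalerA -exprMn mulrC qr expr1n scale1r.
by rewrite sumr_const card_ord -scaler_nat scalerA mulVf // scale1r.
Qed.

Lemma comm_eG l i : e l * G ^+ i = G ^+ i * e l.
Proof. exact: (@commrX _ (e l) G i (eG l)). Qed.

Lemma f_e c l : f c * e l = e l * f c.
Proof.
rewrite /f -scalerAl -scalerAr mulr_suml mulr_sumr; congr (_ *: _).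
by apply: eq_bigr => i _; rewrite -scalerAl -scalerAr comm_eG.
Qed.

Definition P j := \sum_(v < n %/ d) e (j + v * d)%N.

Lemma e_Eu x u : e x * \sum_(s < n) f (u + s) * e s = f (u + x) * e x.
Proof.
rewrite mulr_sumr (bigD1 (Ordinal (ltn_pmod x n_gt0))) //= big1 ?addr0.
  rewrite mulrA -f_e -mulrA ee modn_mod eqxx.
  apply: congr2 => //; apply: f_mod.
  by rewrite -modnDmr (modn_dvdm _ dn) modnDmr.
move=> s /eqP hs.
rewrite mulrA -f_e -mulrA ee (modn_small (ltn_ord s)).
case: eqP => [h|]; last by rewrite mulr0.
by exfalso; apply: hs; apply: val_inj => /=; rewrite h.
Qed.

Lemma Euj_eq u j : Euj n d q G e u j = f (u + j) * P j.
Proof.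
rewrite /Euj Eu_eq /P mulr_sumr; apply: eq_bigr => v _.
rewrite e_Eu; congr (_ * _); apply: f_mod.
by rewrite addnA addnC modnMDl.
Qed.

Lemma e_comm i j : e i * e j = e j * e i.
Proof. rewrite !ee eq_sym; case: eqP => // h. by rewrite (emod i) -h -emod. Qed.

Lemma Pe j l : P j * e l = if (l == j %[mod d])%N then e l else 0.
Proof.
rewrite /P mulr_suml.
case: ifP => [/eqP h | /negbT h].
  have [v0 hv0] := arith_ex j l n d d_gt0 n_gt0 dn (esym h).
  rewrite (bigD1 v0) //= big1 ?addr0.
    by rewrite ee hv0 eqxx emod hv0 -emod.
  move=> v hv; rewrite ee; case: eqP => // hh; exfalso; move/eqP: hv; apply.
  apply: val_inj => /=; apply: (arith_uniq j v v0 n d d_gt0 dn (ltn_ord v) (ltn_ord v0)).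
  by rewrite hh hv0.
apply: big1 => v _; rewrite ee; case: eqP => // hh; exfalso; move/negP: h; apply.
apply/eqP; rewrite -(modn_dvdm l dn) -hh (modn_dvdm _ dn) addnC modnMDl //.
Qed.

Lemma eP j l : e l * P j = P j * e l.
Proof. by rewrite /P mulr_suml mulr_sumr; apply: eq_bigr => v _; rewrite e_comm. Qed.

Lemma PP j l : P j * P l = if (j == l %[mod d])%N then P l else 0.
Proof.
rewrite {2}/P mulr_sumr.
transitivity (\sum_(v < n %/ d) (if (j == l %[mod d])%N then e (l + v * d)%N else 0)).
  by apply: eq_bigr => v _; rewrite Pe addnC modnMDl eq_sym.
by case: ifP => _ //; rewrite big1.
Qed.

Lemma P_comm j l : P j * P l = P l * P j.
Proof. by rewrite {1}/P mulr_sumr {2}/P mulr_suml; apply: eq_bigr => v _; rewrite eP. Qed.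

Lemma P_mod j j' : (j = j' %[mod d])%N -> P j = P j'.
Proof.
move=> h.
have h1 := PP j j'; rewrite h eqxx in h1.
have h2 := PP j' j; rewrite h eqxx in h2.
by rewrite -h1 P_comm h2.
Qed.

Lemma P_f j c : P j * f c = f c * P j.
Proof. by rewrite /P mulr_suml mulr_sumr; apply: eq_bigr => v _; rewrite f_e. Qed.

Lemma f_G c : f c * G = G * f c.
Proof.
rewrite /f -scalerAl -scalerAr mulr_suml mulr_sumr; congr (_ *: _).
by apply: eq_bigr => i _; rewrite -scalerAl -scalerAr -exprSr exprS.
Qed.

Lemma P_G j : P j * G = G * P j.
Proof. by rewrite /P mulr_suml mulr_sumr; apply: eq_bigr => v _; rewrite eG. Qed.

Lemma fmodD u j j' : (j = j' %[mod d])%N -> f (u + j) = f (u + j').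
Proof. by move=> h; apply: f_mod; rewrite -modnDmr h modnDmr. Qed.

Lemma Euj_mod u j j' : (j = j' %[mod d])%N -> Euj n d q G e u j = Euj n d q G e u j'.
Proof. by move=> h; rewrite !Euj_eq (fmodD u j j' h) (P_mod j j' h). Qed.

Lemma Euj_mul u j l : Euj n d q G e u j * Euj n d q G e u l =
   if (j == l %[mod d])%N then Euj n d q G e u j else 0.
Proof.
rewrite !Euj_eq mulrA -(mulrA (f _)) P_f mulrA -mulrA PP.
case: ifP => [/eqP h|_]; last by rewrite mulr0.
by rewrite -(fmodD u j l h) f_idem (P_mod j l h).
Qed.

Lemma r_neq0 : r != 0. Proof. by rewrite /r invr_eq0 q_neq0. Qed.

Lemma rn1 : r ^+ n.-1 = q.
Proof.
apply: (mulIf r_neq0); by rewrite -exprSr prednK ?n_gt0 // rn qr.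
Qed.

Lemma XG : X * G = q *: (G * X).
Proof. by rewrite GX scalerA qr scale1r. Qed.

Lemma X_Gexp i : X * G ^+ i = q ^+ i *: (G ^+ i * X).
Proof.
elim: i => [|i IH]; first by rewrite !expr0 mul1r mulr1 scale1r.
rewrite exprSr mulrA IH -scalerAl.
by rewrite -!mulrA XG -scalerAr scalerA -exprSr.
Qed.

Lemma X_f c : X * f c = f (c + n.-1) * X.
Proof.
rewrite /f -scalerAr -scalerAl mulr_sumr mulr_suml; congr (_ *: _).
apply: eq_bigr => i _; rewrite -scalerAr X_Gexp scalerA -scalerAl.
by rewrite mulnDr exprD (mulnC i n.-1) (exprM r n.-1 i) rn1.
Qed.

Lemma X_e s : X * e s = e (s + n.-1) * X.
Proof. by rewrite eX -addnS prednK ?n_gt0 // eper. Qed.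

Lemma X_P j : X * P j = P (j + n.-1) * X.
Proof.
rewrite /P mulr_sumr mulr_suml; apply: eq_bigr => v _.
by rewrite X_e addnAC.
Qed.

Lemma claim5 u j : X * Euj n d q G e u j = Euj n d q G e u (j + n.-1) * X.
Proof.
by rewrite !Euj_eq mulrA X_f -mulrA X_P mulrA addnA.
Qed.

Lemma claim4 u j : G * Euj n d q G e u j = q ^+ (u + j) *: Euj n d q G e u j
         /\ q ^+ (u + j) *: Euj n d q G e u j = Euj n d q G e u j * G.
Proof.
rewrite !Euj_eq mulrA G_f -scalerAl; split => //.
by rewrite -mulrA P_G mulrA f_G G_f scalerAl.
Qed.

Section Gam.
Variables (l m : nat).
Hypothesis md : (m < d)%N.

Lemma gam_Gexp i : gam e a l m * G ^+ i = r ^+ (m * i) *: (G ^+ i * gam e a l m).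
Proof.
elim: i => [|i IH]; first by rewrite !expr0 mulr1 mul1r muln0 expr0 scale1r.
rewrite exprSr mulrA IH -scalerAl -!mulrA gG // qmE -scalerAr scalerA -exprD.
by congr (_ *: _); congr (_ ^+ _); rewrite mulnS addnC.
Qed.

Lemma gam_f c : gam e a l m * f c = f (c + m) * gam e a l m.
Proof.
rewrite /f -scalerAr -scalerAl mulr_sumr mulr_suml; congr (_ *: _).
apply: eq_bigr => i _; rewrite -scalerAr gam_Gexp scalerA -scalerAl.
by rewrite mulnDr exprD (mulnC i m).
Qed.

Lemma gam_e : gam e a l m * e l = gam e a l m.
Proof.
rewrite /gam; case: m => [|m'] /=; first by rewrite ee eqxx.
by rewrite big_ord_recr /= subnn addn0 -mulrA ae eqxx.
Qed.

Lemma e_gam : e (l + m) * gam e a l m = gam e a l m.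
Proof.
rewrite /gam; case: m => [|m'] /=; first by rewrite addn0 ee eqxx.
by rewrite big_ord_recl /= subn0 mulrA ea addnS eqxx.
Qed.

Lemma gam_P j : gam e a l m * P j = if (l == j %[mod d])%N then gam e a l m else 0.
Proof.
rewrite -{1}gam_e -mulrA eP Pe; case: ifP => _; by rewrite ?mulr0 ?gam_e.
Qed.

Lemma P_gam j : P (j + m) * gam e a l m = if (l == j %[mod d])%N then gam e a l m else 0.
Proof.
rewrite -{1}e_gam mulrA Pe eqn_modDr; case: ifP => _; by rewrite ?mul0r ?e_gam.
Qed.

Lemma claim6 u j : gam e a l m * Euj n d q G e u j =
     if (l == j %[mod d])%N then Euj n d q G e u (j + m) * gam e a l m else 0.
Proof.
rewrite !Euj_eq mulrA gam_f -mulrA gam_P -mulrA P_gam addnA.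
by case: ifP => _; rewrite ?mulr0.
Qed.
End Gam.

Lemma claim2 u : \sum_(j < d) Euj n d q G e u j = Eu n q G e u.
Proof.
rewrite Eu_eq.
transitivity (\sum_(j < d) \sum_(v < n %/ d) f (u + (j + v * d)) * e (j + v * d)%N).
  apply: eq_bigr => j _; rewrite Euj_eq /P mulr_sumr; apply: eq_bigr => v _.
  by rewrite (fmodD u j (j + v * d)) // addnC modnMDl.
rewrite exchange_big /=.
have := @sum_split_mul _ (fun s => f (u + s) * e s) (n %/ d) d.
by rewrite divnK // => ->.
Qed.

Lemma fe_neq0 c l : f c * e l != 0.
Proof.
apply/negP => /eqP h0.
pose l0 : 'I_n := Ordinal (ltn_pmod l n_gt0).
pose j0 : 'I_d := Ordinal d_gt0.
pose i0 : 'I_n := Ordinal n_gt0.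
pose cf := [ffun t : 'I_n * 'I_d * 'I_n * 'I_d =>
   if t.2 == j0 then if t.1.2 == l0 then if t.1.1.2 == j0 then r ^+ (t.1.1.1 * c)
   else 0 else 0 else 0].
have H : \sum_t cf t *: Dbasis n d G X e a t = 0.
  rewrite sum4.
  transitivity (\sum_(i < n) r ^+ (i * c) *: (G ^+ i * e l)).
    apply: eq_bigr => i _.
    rewrite (bigD1 j0) //= [X in _ + X]big1 ?addr0; last first.
      move=> j /negbTE hj; apply: big1 => l' _; apply: big1 => m _.
      rewrite ffunE /= hj; case: ifP => _; [case: ifP => _|]; by rewrite scale0r.
    rewrite (bigD1 l0) //= [X in _ + X]big1 ?addr0; last first.
      move=> l' /negbTE hl; apply: big1 => m _.
      rewrite ffunE /= hl; case: ifP => _; by rewrite scale0r.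
    rewrite (bigD1 j0) //= [X in _ + X]big1 ?addr0; last first.
      by move=> m /negbTE hm; rewrite ffunE /= hm scale0r.
    by rewrite ffunE /= !eqxx /Dbasis /= expr0 mulr1 /gam /= -emod.
  have: (n%:R)^-1 *: \sum_(i < n) r ^+ (i * c) *: (G ^+ i * e l) = 0.
    rewrite -[RHS]h0 /f -scalerAl mulr_suml; congr (_ *: _).
    by apply: eq_bigr => i _; rewrite scalerAl.
  by move/eqP; rewrite scaler_eq0 invr_eq0 (negbTE n0) /= => /eqP.
have := indep cf H (i0, j0, l0, j0); rewrite ffunE /= !eqxx mul0n expr0 => /eqP.
by rewrite oner_eq0.
Qed.

Lemma main_sec (u : nat) :
  [/\ (forall j l : 'I_d,
         Euj n d q G e u j * Euj n d q G e u l
           = if j == l then Euj n d q G e u j else 0),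
      \sum_(j < d) Euj n d q G e u j = Eu n q G e u,
      (forall j j' : nat,
         Euj n d q G e u j = Euj n d q G e u j' <-> j = j' %[mod d])
    & [/\ (forall j : nat,
         G * Euj n d q G e u j = q ^+ (u + j) *: Euj n d q G e u j
         /\ q ^+ (u + j) *: Euj n d q G e u j = Euj n d q G e u j * G),
      (forall j : nat,
         X * Euj n d q G e u j = Euj n d q G e u (j + n.-1) * X)
    & (forall (l m j : nat), (m < d)%N ->
         gam e a l m * Euj n d q G e u j =
           if l == j %[mod d] then Euj n d q G e u (j + m) * gam e a l m
           else 0)]].
Proof.
split.
- by move=> j l; rewrite Euj_mul !modn_small.
- exact: claim2.
- move=> j j'; split; last exact: Euj_mod.
  move=> h; apply/eqP; apply/negPn/negP => hn.
  have e1 := Euj_mul u j j; rewrite eqxx in e1.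
  have e2 := Euj_mul u j j'; rewrite (negbTE hn) in e2.
  have h1 : Euj n d q G e u j = 0 by rewrite -e1 {2}h e2.
  have := fe_neq0 (u + j) j; move/negP; apply.
  have : Euj n d q G e u j * e j = 0 by rewrite h1 mul0r.
  by rewrite Euj_eq -mulrA Pe eqxx => ->.
- split.
  + exact: claim4.
  + exact: claim5.
  + by move=> l m j md; apply: claim6.
Qed.
End Main.

Theorem mainTheorem3 (k : closedFieldType) (n d : nat) (q : k)
  (A : algType k) (G X : A) (e a : nat -> A) :
  (2 <= d)%N -> (d %| n)%N -> (n%:R : k) != 0 -> d.-primitive_root q ->
  is_DLambda n d q G X e a ->
  forall u : 'I_n,
  [/\ (forall j l : 'I_d,
         Euj n d q G e u j * Euj n d q G e u l
           = if j == l then Euj n d q G e u j else 0),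
      \sum_(j < d) Euj n d q G e u j = Eu n q G e u,
      (forall j j' : nat,
         Euj n d q G e u j = Euj n d q G e u j' <-> j = j' %[mod d])
    & [/\ (forall j : nat,
         G * Euj n d q G e u j = q ^+ (u + j) *: Euj n d q G e u j
         /\ q ^+ (u + j) *: Euj n d q G e u j = Euj n d q G e u j * G),
      (forall j : nat,
         X * Euj n d q G e u j = Euj n d q G e u (j + n.-1) * X)
    & (forall (l m j : nat), (m < d)%N ->
         gam e a l m * Euj n d q G e u j =
           if l == j %[mod d] then Euj n d q G e u (j + m) * gam e a l m
           else 0)]].
Proof.
move=> d2 dn n0 prim [per [esum ee ae ea gd] [Gn Xd GX gG gX] indep span] u.
have eper : forall i, e (i + n)%N = e i by move=> i; case: (per i).
exact: (@main_sec _ _ _ _ _ _ _ _ _ d2 dn n0 prim eper ee ae ea Gn GX gG gX indep u).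
Qed.
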